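(* Let $n\ge2$ and $d\ge1$ with $d^2\mid n-1$, and let $L_{n,d}$ be the rank two lattice with basis in which the Gram matrix is $\frac{2n-2}{d^2}\begin{pmatrix}1&0\\0&0\end{pmatrix}$. A vector $(x,y)\in L_{n,d}$ is primitive of self-intersection $2n-2$ if and only if $|x|=d$ and $\gcd(d,y)=1$. Two primitive vectors $(d,y)$ and $(d,z)$ belong to the same $O(L_{n,d})$-orbit if and only if $y\equiv z$ or $y\equiv -z$ modulo $d$. Consequently, for $d\ge 2$, the number of $O(L_{n,d})$-orbits of primitive vectors of $L_{n,d}$ of self-intersection $2n-2$ equals $\nu(d)$, where $\nu(2):=1$ and, for $d>2$, $\nu(d)$ is half the number of multiplicative units in $\mathbb{Z}/d\mathbb{Z}$. *)

(* Defs.v *)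
From mathcomp Require Import all_boot all_order all_algebra.
Set Implicit Arguments. Unset Strict Implicit. Unset Printing Implicit Defensive.
Import Order.TTheory GRing.Theory Num.Theory.
Local Open Scope ring_scope.

(* The lattice L_{n,d} is Z^2 (vectors = pairs of integers, coordinates in the
   given basis) with bilinear form b((x,y),(x',y')) = c * x * x',
   where c = (2n-2)/d^2 (an integer, since d^2 | n-1). *)
Definition gramc (n d : nat) : int := ((2 * n - 2) %/ (d ^ 2))%N%:Z.

Definition bil (c : int) (v w : int * int) : int := c * v.1 * w.1.

Definition act (g : 'M[int]_2) (v : int * int) : int * int :=
  (g ord0 ord0 * v.1 + g ord0 ord_max * v.2,
   g ord_max ord0 * v.1 + g ord_max ord_max * v.2).

Definition isometry (c : int) (g : 'M[int]_2) : Prop :=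
  g \in unitmx /\ forall v w, bil c (act g v) (act g w) = bil c v w.

Definition same_orbit (c : int) (v w : int * int) : Prop :=
  exists g, isometry c g /\ act g v = w.

Definition primitive (v : int * int) : Prop :=
  forall (k : int) (w : int * int), v = (k * w.1, k * w.2) -> `|k| = 1.

Definition nu (d : nat) : nat := if d == 2%N then 1%N else (totient d %/ 2)%N.

Definition num_classes (T : Type) (P : T -> Prop) (R : T -> T -> Prop) (k : nat) : Prop :=
  exists f : T -> nat,
    (forall v, P v -> (f v < k)%N) /\
    (forall i, (i < k)%N -> exists v, P v /\ f v = i) /\
    (forall v w, P v -> P w -> (R v w <-> f v = f w)).

(* Main.v *)
From Pilot Require Import Defs.
From mathcomp Require Import all_boot all_order all_algebra ring zify.
Import Order.TTheory GRing.Theory Num.Theory.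
Local Open Scope ring_scope.

Lemma unit1 (k t : int) : t * k = 1 -> k = 1 \/ k = -1.
Proof. move/intUnitRing.unitzPl; rewrite qualifE /= => /orP[/eqP|/eqP]; tauto. Qed.

Lemma det2 (A : 'M[int]_2) : \det A = A ord0 ord0 * A ord_max ord_max - A ord0 ord_max * A ord_max ord0.
Proof.
rewrite (expand_det_row _ ord0) !big_ord_recl big_ord0 /cofactor !det_mx11 /=.
rewrite !mxE /=.
have E1 : (lift ord0 (0 : 'I_1)) = (ord_max : 'I_2) by apply/val_inj.
rewrite E1.
have E2 : lift (ord_max : 'I_2) (0:'I_1) = (ord0 : 'I_2) by apply/val_inj.
rewrite E2 /= expr0 expr1. ring.
Qed.

Lemma prim_gcd (x y : int) : primitive (x, y) <-> gcdz x y = 1.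
Proof.
split.
- move=> hp. set g := gcdz x y.
  have hx : x = g * (x %/ g)%Z by rewrite mulrC divzK // dvdz_gcdl.
  have hy : y = g * (y %/ g)%Z by rewrite mulrC divzK // dvdz_gcdr.
  have := hp g ((x %/ g)%Z, (y %/ g)%Z). rewrite /= -hx -hy => /(_ erefl).
  have : 0 <= g by rewrite /g /gcdz.
  lia.
- move=> hg k [w1 w2] [ex ey].
  have /coprimezP [[u v] /= huv] : coprimez x y by rewrite /coprimez hg.
  have : (u * w1 + v * w2) * k = 1 by rewrite -huv ex ey /=; ring.
  move/unit1 => [->|->]; lia.
Qed.

Lemma iso_char (c : int) (g : 'M[int]_2) : c != 0 -> Pilot.Defs.isometry c g ->
  g ord0 ord_max = 0 /\ (g ord0 ord0 = 1 \/ g ord0 ord0 = -1) /\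
  (g ord_max ord_max = 1 \/ g ord_max ord_max = -1).
Proof.
move=> c0 [hu hb].
have h01 : g ord0 ord_max = 0.
  have := hb (0,1) (0,1); rewrite /bil /act /= !mulr0 !mulr1 !add0r => H.
  have : c * (g ord0 ord_max * g ord0 ord_max) == 0 by rewrite mulrA H.
  by rewrite !mulf_eq0 (negbTE c0) orbb /= => /eqP.
have h00 : g ord0 ord0 = 1 \/ g ord0 ord0 = -1.
  have := hb (1,0) (1,0); rewrite /bil /act /= !mulr0 !mulr1 !addr0 => H.
  have : c * (g ord0 ord0 * g ord0 ord0) = c * 1 by rewrite mulrA H mulr1.
  move/(mulfI c0) => H2. apply: (@unit1 _ (g ord0 ord0)). by rewrite H2.
split => //; split => //.
move: hu; rewrite unitmxE det2 h01 mul0r subr0 qualifE /= => /orP[/eqP|/eqP] H;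
  case: h00 => E; rewrite E in H; lia.
Qed.

Arguments iso_char {c g}.
Definition mkM (eps a e : int) : 'M[int]_2 :=
  \matrix_(i < 2, j < 2) if i == ord0 then (if j == ord0 then eps else 0)
                          else (if j == ord0 then a else e).

Lemma orbit_char (c : int) x y x' y' : c != 0 ->
  same_orbit c (x,y) (x',y') <->
  ((x' = x \/ x' = -x) /\ exists a e, (e = 1 \/ e = -1) /\ y' = a * x + e * y).
Proof.
move=> c0; split.
- move=> [g [hiso hact]].
  have [h01 [h00 h11]] := iso_char c0 hiso.
  move: hact; rewrite /act /= h01 mul0r addr0 => [[<- <-]].
  split; first by case: h00 => ->; lia.
  by exists (g ord_max ord0), (g ord_max ord_max).
- move=> [hx [a [e [he ->]]]].
  have [eps [heps ->]] : exists eps : int, (eps = 1 \/ eps = -1) /\ x' = eps * x.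
    by case: hx => ->; [exists 1 | exists (-1)]; split; try lia.
  exists (mkM eps a e); split; last by rewrite /act /mkM !mxE /=; congr pair; ring.
  split.
  + rewrite unitmxE det2 /mkM !mxE /= qualifE /=.
    case: heps => ->; case: he => ->; apply/orP; (by left; apply/eqP; lia) || (by right; apply/eqP; lia).
  + move=> [v1 v2] [w1 w2]; rewrite /bil /act /mkM !mxE /=.
    by case: heps => ->; ring.
Qed.
Definition S (d : nat) : seq nat := [seq k <- iota 0 d | coprime k d && (2 * k <= d)%N].

Lemma coprime_rev d k : (k <= d)%N -> coprime (d - k) d = coprime k d.
Proof.
move=> hk; rewrite /coprime.
have E : d = (k + (d - k))%N by lia.
move: (d - k)%N E => m ->.
by rewrite gcdnDr gcdnDl gcdnC.
Qed.

Lemma sizeS d : (2 <= d)%N -> size (S d) = nu d.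
Proof.
move=> hd; rewrite /nu; case: eqP => [->|hd2]; first by [].
have hd3 : (2 < d)%N by lia.
pose F k := (coprime k d && (2 * k <= d)%N).
pose G k := (coprime k d && (d <= 2 * k)%N).
have cnn : coprime d d = false by rewrite /coprime gcdnn; apply/eqP; lia.
have hA : size (S d) = (\sum_(0 <= k < d.+1) F k)%N.
  rewrite big_nat_recr //= /F cnn.
  rewrite addn0 /S size_filter -sum1_count big_mkcond /= /index_iota subn0.
  by apply: eq_bigr => k _; case: (_ && _).
have hAB : (\sum_(0 <= k < d.+1) F k = \sum_(0 <= k < d.+1) G k)%N.
  rewrite big_nat_rev /= big_nat_cond [in RHS]big_nat_cond.
  apply: eq_bigr => k /andP[/andP[_ hk] _].
  rewrite add0n subSS /F /G coprime_rev; last by lia.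
  congr (_ && _); apply/idP/idP; lia.
have hT : (\sum_(0 <= k < d.+1) F k + \sum_(0 <= k < d.+1) G k = totient d)%N.
  rewrite -big_split /= big_nat_recr //= /F /G cnn /= addn0 totient_count_coprime.
  rewrite big_nat_cond [in RHS]big_nat_cond.
  rewrite addn0; apply: eq_bigr => k /andP[/andP[_ hk] _].
  rewrite [coprime d k]coprime_sym; case hc: (coprime k d) => //=.
  have h2 : ~ (2 * k = d)%N.
    move=> hkd; move: hc; rewrite -hkd /coprime gcdnMl => /eqP hk1; lia.
  case: (leqP (2 * k) d) => h1; case: (leqP d (2 * k)) => h3 //=; lia.
lia.
Qed.

Definition pm (d : nat) (a b : int) :=
  exists q e : int, (e = 1 \/ e = -1) /\ a - e * b = q * d%:Z.

Lemma pm_sym d a b : pm d a b -> pm d b a.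
Proof.
move=> [q [e [he h]]]; case: he => E; subst e;
  [exists (-q), 1 | exists q, (-1)]; split; try lia.
Qed.

Lemma pm_trans d a b c : pm d a b -> pm d b c -> pm d a c.
Proof.
move=> [q1 [e1 [he1 h1]]] [q2 [e2 [he2 h2]]].
exists (q1 + e1 * q2), (e1 * e2).
case: he1 => E1; case: he2 => E2; subst e1 e2; split; lia.
Qed.

Lemma pm_sign d s a : s = 1 \/ s = -1 -> pm d a (s * a).
Proof. move=> hs; exists 0, s; split => //; case: hs => ->; lia. Qed.

Lemma pm_mod d y z :
  ((y == z %[mod d%:Z])%Z \/ (y == - z %[mod d%:Z])%Z) <-> pm d y z.
Proof.
rewrite !eqz_mod_dvd; split.
- move=> [/dvdzP [q hq] | /dvdzP [q hq]].
  + by exists q, 1; split; [left | lia].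
  + by exists q, (-1); split; [right | lia].
- move=> [q [e [he h]]]; case: he => E; subst e.
  + by left; apply/dvdzP; exists q; lia.
  + by right; apply/dvdzP; exists q; lia.
Qed.

Lemma pm_orbit d s x y y' : s = 1 \/ s = -1 -> x = s * d%:Z ->
  (exists a e, (e = 1 \/ e = -1) /\ y' = a * x + e * y) <-> pm d y' y.
Proof.
move=> hs ->; split.
- move=> [a [e [he h]]]; exists (a * s), e; split => //.
  by case: hs => E; subst s; lia.
- move=> [q [e [he h]]]; exists (q * s), e; split => //.
  by case: hs => E; subst s; lia.
Qed.

Definition mm (d : nat) (t : int) : nat :=
  let r := absz (t %% d%:Z)%Z in minn r (d - r).

Lemma mm_spec d t : (1 <= d)%N ->
  (mm d t < d)%N /\ (2 * mm d t <= d)%N /\ pm d (mm d t)%:Z t.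
Proof.
move=> hd; rewrite /mm.
have ht := divz_eq t d%:Z.
have hR0 : 0 <= (t %% d%:Z)%Z by apply: modz_ge0; apply/eqP; lia.
have hRd : (t %% d%:Z)%Z < d%:Z by apply: ltz_pmod; lia.
have hr : (absz (t %% d%:Z)%Z)%:Z = (t %% d%:Z)%Z by rewrite abszE ger0_norm.
move: ht hR0 hRd hr; set R := (t %% d%:Z)%Z; set Q := (t %/ d%:Z)%Z.
set r := absz R => ht hR0 hRd hr.
have [hle|hlt] := leqP r (d - r).
- split; [lia|split; [lia|]].
  by exists (- Q), 1; split; [left|lia].
- split; [lia|split; [lia|]].
  by exists (1 + Q), (-1); split; [right|lia].
Qed.

Lemma pm_uniq d m1 m2 : (1 <= d)%N -> (2 * m1 <= d)%N -> (2 * m2 <= d)%N ->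
  pm d m1%:Z m2%:Z -> m1 = m2.
Proof.
move=> hd h1 h2 [q [e [he h]]]; case: he => E; subst e.
- have [q0|[q2|q3]] : q = 0 \/ 1 <= q \/ q < 0 by lia.
  + subst; lia.
  + nia.
  + nia.
- have [q0|[q1|[q2|q3]]] : q = 0 \/ q = 1 \/ 2 <= q \/ q < 0 by lia.
  + subst; lia.
  + subst; lia.
  + nia.
  + nia.
Qed.

Lemma pm_coprime d m y : gcdz d%:Z y = 1 -> pm d m%:Z y -> coprime m d.
Proof.
move=> hg [q [e [he h]]].
have /coprimezP [[u v] /= huv] : coprimez d%:Z y by rewrite /coprimez hg.
have : coprimez m%:Z d%:Z.
  apply/coprimezP; exists (v * e, u - v * e * q) => /=.
  have hm : m%:Z = q * d%:Z + e * y by lia.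
  rewrite hm; case: he => E; subst e; lia.
by rewrite coprimezE.
Qed.

Lemma gram_eq n d : (2 <= n)%N -> (1 <= d)%N -> (d ^ 2 %| n - 1)%N ->
  gramc n d * (d%:Z * d%:Z) = (2 * n - 2)%N%:Z.
Proof.
move=> hn hd hdiv; rewrite /gramc.
have h2 : (d ^ 2 %| 2 * n - 2)%N.
  have -> : (2 * n - 2 = 2 * (n - 1))%N by lia.
  by rewrite dvdn_mull.
have := divnK h2. move: ((2 * n - 2) %/ d ^ 2)%N => k hk.
rewrite -hk. nia.
Qed.

Arguments gram_eq {n d}.
Arguments mm_spec {d} t.
Arguments pm_coprime {d m y}.
Arguments pm_uniq {d m1 m2}.
Arguments pm_orbit {d s x} y y'.
Arguments pm_sym {d a b}.
Arguments pm_trans {d a b c}.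
Arguments pm_sign {d s} a.

Lemma part1 n d x y : (2 <= n)%N -> (1 <= d)%N -> (d ^ 2 %| n - 1)%N ->
  (primitive (x, y) /\ bil (gramc n d) (x, y) (x, y) = (2 * n - 2)%N%:Z)
  <-> (`|x| = d%:Z /\ gcdz d%:Z y = 1).
Proof.
move=> hn hd hdiv; have hc := gram_eq hn hd hdiv.
have c0 : gramc n d != 0 by apply/eqP => c0; rewrite c0 mul0r in hc; lia.
rewrite prim_gcd /bil /= -hc -(mulrA _ x x).
have hxx : (gramc n d * (x * x) = gramc n d * (d%:Z * d%:Z)) <-> `|x| = d%:Z.
  split.
  - move/(mulfI c0) => h. nia.
  - move=> h; have [->| ->] : x = d%:Z \/ x = - d%:Z by lia.
    + by [].
    + by rewrite mulrNN.
split.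
- move=> [hg hb]. have hx : `|x| = d%:Z by apply/hxx.
  split => //. have ha : absz x = d by lia.
  by move: hg; rewrite /gcdz ha.
- move=> [hx hg]. have ha : absz x = d by lia.
  split; last by apply/hxx.
  by rewrite /gcdz ha; exact: hg.
Qed.

Theorem lemma2p6 (n d : nat) (hn : (2 <= n)%N) (hd : (1 <= d)%N)
  (hdiv : (d ^ 2 %| n - 1)%N) :
  let c := gramc n d in
  (forall x y : int,
     (primitive (x, y) /\ bil c (x, y) (x, y) = (2 * n - 2)%N%:Z)
     <-> (`|x| = d%:Z /\ gcdz d%:Z y = 1)) /\
  (forall y z : int,
     primitive (d%:Z, y) -> bil c (d%:Z, y) (d%:Z, y) = (2 * n - 2)%N%:Z ->
     primitive (d%:Z, z) -> bil c (d%:Z, z) (d%:Z, z) = (2 * n - 2)%N%:Z ->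
     (same_orbit c (d%:Z, y) (d%:Z, z) <->
      ((y == z %[mod d%:Z])%Z \/ (y == - z %[mod d%:Z])%Z))) /\
  ((2 <= d)%N ->
     num_classes
       (fun v => primitive v /\ bil c v v = (2 * n - 2)%N%:Z)
       (same_orbit c) (nu d)).
Proof.
move=> c.
have hc := gram_eq hn hd hdiv.
have c0 : c != 0 by apply/eqP => c0; rewrite /c in c0; rewrite c0 mul0r in hc; lia.
have P1 : forall x y, (primitive (x, y) /\ bil c (x, y) (x, y) = (2 * n - 2)%N%:Z)
     <-> (`|x| = d%:Z /\ gcdz d%:Z y = 1) by move=> x y; exact: part1.
have orb : forall s s' x y x' y', s = 1 \/ s = -1 -> s' = 1 \/ s' = -1 ->
    x = s * d%:Z -> x' = s' * d%:Z ->
    same_orbit c (x, y) (x', y') <-> pm d y' y.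
  move=> s s' x y x' y' hs hs' hx hx'.
  rewrite orbit_char // -(pm_orbit y y' hs hx).
  split; first by case.
  move=> h; split => //; case: hs => E; case: hs' => E'; subst; lia.
split; first exact: P1.
split.
- move=> y z _ _ _ _.
  rewrite (orb 1 1 d%:Z y d%:Z z); try (by left); try by rewrite mul1r.
  split => h; [apply/pm_mod; apply: pm_sym; exact: h | apply: pm_sym; apply/pm_mod; exact: h].
- move=> hd2.
  pose t (v : int * int) := if 0 <= v.1 then v.2 else - v.2.
  exists (fun v => index (mm d (t v)) (S d)).
  have key : forall v, primitive v /\ bil c v v = (2*n-2)%N%:Z ->
     exists s, (s = 1 \/ s = -1) /\ v.1 = s * d%:Z /\ mm d (t v) \in S d /\
               pm d (mm d (t v))%:Z v.2.
    move=> [x y] /P1 [hx hg].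
    have [s [hs [hxs hts]]] : exists s, (s = 1 \/ s = -1) /\ x = s * d%:Z /\ t (x,y) = s * y.
      rewrite /t /=; case: ifP => h.
      + by exists 1; split; [left|split; lia].
      + by exists (-1); split; [right| split; lia].
    have [hm1 [hm2 hm3]] := mm_spec (t (x,y)) hd.
    have hpm : pm d (mm d (t (x,y)))%:Z y.
      apply: pm_trans hm3 _; rewrite hts; apply: pm_sym; exact: pm_sign.
    exists s; split => //; split => //; split => //.
    rewrite mem_filter mem_iota /= hm2 (pm_coprime hg hpm) /=. lia.
  split.
  + move=> v /key [s [_ [_ [hmem _]]]]. by rewrite -sizeS // index_mem.
  split.
  + move=> i hi. rewrite -sizeS // in hi.
    set k := nth 0%N (S d) i.
    have hk : k \in S d by apply: mem_nth.
    move: (hk); rewrite mem_filter mem_iota => /andP[/andP[hck hk2] /andP[_ hkd]].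
    exists (d%:Z, k%:Z); split.
    * apply/P1; split; first by lia.
      rewrite /gcdz /= gcdnC; by move/eqP: hck => ->.
    * have -> : mm d (t (d%:Z, k%:Z)) = k.
        rewrite /t /=.
        have [hm1 [hm2 hm3]] := mm_spec k%:Z hd.
        exact: pm_uniq hd hm2 hk2 hm3.
      by rewrite index_uniq // filter_uniq // iota_uniq.
  + move=> [x y] [x' y'] hv hw.
    have [s [hs [hx [hm hp]]]] := key _ hv.
    have [s' [hs' [hx' [hm' hp']]]] := key _ hw.
    simpl in *.
    rewrite (orb s s' x y x' y' hs hs' hx hx').
    have [_ [hb1 _]] := mm_spec (t (x,y)) hd.
    have [_ [hb2 _]] := mm_spec (t (x',y')) hd.
    split.
    * move=> h. suff -> : mm d (t (x,y)) = mm d (t (x',y')) by [].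
      apply: pm_uniq hd hb1 hb2 _.
      apply: pm_trans hp _; apply: pm_trans (pm_sym h) _; exact: pm_sym.
    * move=> h.
      have e : mm d (t (x,y)) = mm d (t (x',y')).
        by rewrite -(nth_index 0%N hm) h nth_index.
      apply: pm_trans (pm_sym hp') _; rewrite -e; exact: hp.
Qed.
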